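(* Let $(X,\sigma_X)$ be a one-sided full shift, $(Y,\sigma_Y)$ a subshift, $\pi:X\to Y$ a one-block factor map, and $f\in C(X)$ depending only on the first coordinate. With $\bar g_n(y)=\sup_{E_n(y)}\sum_{x\in E_n(y)}e^{f(x)+\cdots+f(\sigma_X^{n-1}x)}$, one has $\bar g_n(y)=\bar g_1(y)\bar g_{n-1}(\sigma_Yy)$ for all $n\ge2$ and $y\in Y$. Consequently $\lim_{n\to\infty}\frac1n\int\log\bar g_n\,dm=\int\log\bar g_1\,dm$ for all $m\in M(Y,\sigma_Y)$, and the image under $\pi$ of the unique invariant Gibbs measure for $f$ is the unique invariant Gibbs measure for the locally constant function $\log\bar g_1$ on $Y$.
   Context: Full shift: $\{1,\dots,k\}^{\mathbb N}$ with left shift; subshift: closed shift-invariant subset of some $\{1,\dots,l\}^{\mathbb N}$. One-block factor map: continuous surjection commuting with shifts, $\pi(x)_i$ depending only on $x_i$. $E_n(y)$: any set with exactly one point from each cylinder $[x_1\cdots x_n]$ of $X$ with $\pi([x_1\cdots x_n])\subseteq[y_1\cdots y_n]$; the sup is over all such choices. Gibbs measure for $\phi\in C(Z)$: invariant $\mu$ with $C_0^{-1}<\mu([z_1\cdots z_n])/e^{-nP(\phi)+\sum_{i<n}\phi(\sigma^iz)}<C_0$ for all $z,n$. *)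

(* Defs.v *)
From Stdlib Require Import Reals List Arith ClassicalEpsilon.
Import ListNotations.
Open Scope R_scope.

(* One-sided sequences over alphabet {0,...,a-1} (the paper's {1,...,a}). *)
Definition sq := nat -> nat.
Definition shift (x : sq) : sq := fun i => x (S i).
Definition in_alph (a : nat) (x : sq) : Prop := forall i, (x i < a)%nat.
Definition prefix (x : sq) (n : nat) : list nat := map x (seq 0 n).
Definition cyl (w : list nat) (x : sq) : Prop := prefix x (length w) = w.

Definition subshift (l : nat) (Y : sq -> Prop) : Prop :=
  (forall y, Y y -> in_alph l y) /\
  (forall y, Y y -> Y (shift y)) /\
  (forall y, in_alph l y ->
     (forall n, exists z, Y z /\ prefix z n = prefix y n) -> Y y).

Definition one_block_factor (k l : nat) (Y : sq -> Prop) (pi : sq -> sq) : Prop :=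
  (forall x, in_alph k x -> Y (pi x)) /\
  (forall y, Y y -> exists x, in_alph k x /\ pi x = y) /\
  (forall x n, in_alph k x -> exists N, forall x', in_alph k x' ->
      prefix x' N = prefix x N -> prefix (pi x') n = prefix (pi x) n) /\
  (forall x i, in_alph k x -> pi (shift x) i = shift (pi x) i) /\
  (forall x x' i, in_alph k x -> in_alph k x' -> x i = x' i -> pi x i = pi x' i).

Fixpoint words (a n : nat) : list (list nat) :=
  match n with
  | O => [[]]
  | S m => flat_map (fun b => map (cons b) (words a m)) (seq 0 a)
  end.

Definition sumR (l : list R) : R := fold_right Rplus 0 l.

Fixpoint birk (f : sq -> R) (n : nat) (x : sq) : R :=
  match n with
  | O => 0
  | S m => f x + birk f m (shift x)
  end.

Definition lub_of (E : R -> Prop) : R := epsilon (inhabits 0) (fun s => is_lub E s).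

Definition cyl_maps_into (k : nat) (pi : sq -> sq) (w v : list nat) : Prop :=
  forall x, in_alph k x -> cyl w x -> cyl v (pi x).

(* the set of values  sum_{x in E_n(y)} e^{S_n f(x)}  over all choices of E_n(y) *)
Definition Esums (k : nat) (pi : sq -> sq) (f : sq -> R) (n : nat) (y : sq) : R -> Prop :=
  fun s => exists (c : list nat -> sq) (L : list (list nat)),
    NoDup L /\
    (forall w, In w L <-> (length w = n /\ Forall (fun b => (b < k)%nat) w /\
                          cyl_maps_into k pi w (prefix y n))) /\
    (forall w, In w L -> in_alph k (c w) /\ cyl w (c w)) /\
    s = sumR (map (fun w => exp (birk f n (c w))) L).

Definition gbar (k : nat) (pi : sq -> sq) (f : sq -> R) (n : nat) (y : sq) : R :=
  lub_of (Esums k pi f n y).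

(* shift-invariant Borel probability measure supported on Z, given by its
   values on cylinders (Kolmogorov/Caratheodory extension). *)
Definition inv_meas (a : nat) (Z : sq -> Prop) (m : list nat -> R) : Prop :=
  (forall w, 0 <= m w) /\
  m [] = 1 /\
  (forall w, m w = sumR (map (fun b => m (w ++ [b])) (seq 0 a))) /\
  (forall w, m w = sumR (map (fun b => m (b :: w)) (seq 0 a))) /\
  (forall w, ~ (exists z, Z z /\ cyl w z) -> m w = 0).

Definition riemann (a : nat) (Z : sq -> Prop) (m : list nat -> R) (F : sq -> R)
  (N : nat) : R :=
  sumR (map (fun w => m w * F (epsilon (inhabits (fun _ => O))
                                      (fun z => Z z /\ cyl w z)))
            (words a N)).
Definition is_integral (a : nat) (Z : sq -> Prop) (m : list nat -> R) (F : sq -> R)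
  (I : R) : Prop := Un_cv (riemann a Z m F) I.

Definition is_pressure (a : nat) (Z : sq -> Prop) (phi : sq -> R) (P : R) : Prop :=
  Un_cv (fun n =>
    ln (sumR (map (fun w =>
          if excluded_middle_informative (exists z, Z z /\ cyl w z)
          then exp (lub_of (fun t => exists z, Z z /\ cyl w z /\ t = birk phi (S n) z))
          else 0) (words a (S n)))) / INR (S n)) P.

Definition gibbs (a : nat) (Z : sq -> Prop) (phi : sq -> R) (mu : list nat -> R) : Prop :=
  inv_meas a Z mu /\
  exists P C0, is_pressure a Z phi P /\ 0 < C0 /\
    forall z n, Z z -> (1 <= n)%nat ->
      / C0 < mu (prefix z n) / exp (- INR n * P + birk phi n z) < C0.

(* nu = pi_* mu  (pi^{-1}[v] is a finite union of long cylinders) *)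
Definition pushforward (k : nat) (pi : sq -> sq) (mu nu : list nat -> R) : Prop :=
  forall v, exists N0, forall N, (N0 <= N)%nat ->
    nu v = sumR (map (fun w =>
             if excluded_middle_informative (cyl_maps_into k pi w v) then mu w else 0)
           (words k N)).

(* Main.v *)
Require Import Defs.
From Stdlib Require Import Reals List Arith ClassicalEpsilon.
Import ListNotations.
Open Scope R_scope.
From Stdlib Require Import Lra Lia Permutation Classical FunctionalExtensionality.

Lemma sumR_app l1 l2 : sumR (l1++l2) = sumR l1 + sumR l2.
Proof. induction l1; simpl; [lra| rewrite IHl1; lra]. Qed.

Lemma sumR_plus {A} (F G : A -> R) L :
  sumR (map (fun x => F x + G x) L) = sumR (map F L) + sumR (map G L).
Proof. induction L; simpl; [lra| rewrite IHL; lra]. Qed.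

Lemma sumR_minus {A} (F G : A -> R) L :
  sumR (map (fun x => F x - G x) L) = sumR (map F L) - sumR (map G L).
Proof. induction L; simpl; [lra| rewrite IHL; lra]. Qed.

Lemma sumR_scal {A} c (F : A -> R) L :
  sumR (map (fun x => c * F x) L) = c * sumR (map F L).
Proof. induction L; simpl; [lra| rewrite IHL; lra]. Qed.

Lemma sumR_ext {A} (F G : A -> R) L :
  (forall x, In x L -> F x = G x) -> sumR (map F L) = sumR (map G L).
Proof. induction L; simpl; intros H; auto. rewrite H, IHL; auto. Qed.

Lemma sumR_nonneg {A} (F : A -> R) L :
  (forall x, In x L -> 0 <= F x) -> 0 <= sumR (map F L).
Proof. induction L; simpl; intros H; [lra|]. pose proof (H a (or_introl eq_refl)).
  pose proof (IHL (fun x h => H x (or_intror h))). lra. Qed.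

Lemma sumR_le {A} (F G : A -> R) L :
  (forall x, In x L -> F x <= G x) -> sumR (map F L) <= sumR (map G L).
Proof. induction L; simpl; intros H; [lra|]. pose proof (H a (or_introl eq_refl)).
  pose proof (IHL (fun x h => H x (or_intror h))). lra. Qed.

Lemma sumR_ge_in {A} (F : A -> R) L y :
  (forall x, In x L -> 0 <= F x) -> In y L -> F y <= sumR (map F L).
Proof. induction L; simpl; intros H Hy; [contradiction|].
  destruct Hy as [<-|Hy].
  - pose proof (sumR_nonneg F L (fun x h => H x (or_intror h))). lra.
  - pose proof (H a (or_introl eq_refl)). pose proof (IHL (fun x h => H x (or_intror h)) Hy). lra. Qed.

Lemma sumR_zero {A} (F : A -> R) L : (forall x, In x L -> F x = 0) -> sumR (map F L) = 0.
Proof. induction L; simpl; intros H; auto. rewrite H, IHL; auto. lra. Qed.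

Lemma sumR_flat_map {A B} (F : B -> R) (G : A -> list B) L :
  sumR (map F (flat_map G L)) = sumR (map (fun x => sumR (map F (G x))) L).
Proof. induction L; simpl; auto. rewrite map_app, sumR_app, IHL; auto. Qed.

Lemma sumR_swap {A B} (F : A -> B -> R) L1 L2 :
  sumR (map (fun i => sumR (map (fun j => F i j) L2)) L1) =
  sumR (map (fun j => sumR (map (fun i => F i j) L1)) L2).
Proof. induction L1; simpl.
  - rewrite sumR_zero; auto.
  - rewrite IHL1, <- sumR_plus. auto. Qed.

Lemma sumR_perm l1 l2 : Permutation l1 l2 -> sumR l1 = sumR l2.
Proof. induction 1; simpl; lra. Qed.

Lemma words_S a n (F : list nat -> R) :
  sumR (map F (words a (S n))) =
  sumR (map (fun b => sumR (map (fun w => F (b::w)) (words a n))) (seq 0 a)).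
Proof. simpl. rewrite sumR_flat_map. apply sumR_ext; intros. now rewrite map_map. Qed.

Lemma words_0 a (F : list nat -> R) : sumR (map F (words a 0)) = F [].
Proof. simpl. lra. Qed.

Lemma in_words a n w : In w (words a n) <-> length w = n /\ Forall (fun b => (b < a)%nat) w.
Proof. revert w; induction n; intros w; simpl.
  - split. intros [<-|[]]; auto. intros [H _]; destruct w; simpl in *; auto; discriminate.
  - rewrite in_flat_map. split.
    + intros [b [Hb Hw]]. apply in_map_iff in Hw. destruct Hw as [w' [<- Hw']].
      apply IHn in Hw'. apply in_seq in Hb. simpl. destruct Hw'. split; [lia|]. constructor; auto; lia.
    + intros [Hl Hf]. destruct w as [|b w']; simpl in Hl; try discriminate.
      inversion Hf; subst. exists b. split. apply in_seq; lia.
      apply in_map. apply IHn. split; auto.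
Qed.

Lemma NoDup_words a n : NoDup (words a n).
Proof. induction n; simpl. constructor; auto. constructor.
  generalize (seq_NoDup a 0). generalize (seq 0 a). intros L HL. induction L; simpl. constructor.
  inversion HL; subst. apply NoDup_app; auto.
  - apply FinFun.Injective_map_NoDup; auto. intros x y H; now inversion H.
  - intros w K1 K2. apply in_map_iff in K1. destruct K1 as [w1 [<- _]].
    apply in_flat_map in K2. destruct K2 as [b [Hb Hw]]. apply in_map_iff in Hw.
    destruct Hw as [w2 [E _]]. inversion E; subst; auto.
Qed.

Lemma words_split a n m (F : list nat -> R) :
  sumR (map F (words a (n + m))) =
  sumR (map (fun x => sumR (map (fun y => F (x ++ y)) (words a m))) (words a n)).
Proof. revert F; induction n; intros F; simpl (0 + m)%nat.
  - rewrite words_0. simpl. auto.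
  - simpl (S n + m)%nat. rewrite !words_S. apply sumR_ext; intros b _.
    rewrite IHn. auto. Qed.

Lemma words_1 a (F : list nat -> R) : sumR (map F (words a 1)) = sumR (map (fun b => F [b]) (seq 0 a)).
Proof. rewrite words_S. apply sumR_ext; intros. simpl. lra. Qed.

Definition prodq (qb : nat -> R) (w : list nat) : R := fold_right (fun b r => qb b * r) 1 w.
Lemma prodq_app qb w1 w2 : prodq qb (w1 ++ w2) = prodq qb w1 * prodq qb w2.
Proof. induction w1; simpl; [lra|rewrite IHw1; lra]. Qed.
Lemma prodq_nonneg qb w : (forall b, 0 <= qb b) -> 0 <= prodq qb w.
Proof. intros H; induction w; simpl; [lra|]. specialize (H a). nra. Qed.

Lemma words_prodq a qb n :
  sumR (map (prodq qb) (words a n)) = (sumR (map qb (seq 0 a))) ^ n.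
Proof. induction n. simpl; lra. rewrite words_S. simpl pow.
  rewrite <- IHn. rewrite Rmult_comm, <- sumR_scal.
  apply sumR_ext; intros b _. rewrite Rmult_comm, <- sumR_scal. apply sumR_ext; intros; simpl; lra. Qed.


Definition D (x u : R) : R := x * x / u.

Lemma D_nonneg x u : 0 <= u -> 0 <= D x u.
Proof. intros H. unfold D. destruct (Req_dec u 0) as [->|Hu].
  rewrite Rdiv_0_r; lra. unfold Rdiv; apply Rmult_le_pos; [nra|left; apply Rinv_0_lt_compat; lra]. Qed.

Lemma D_expand C x r y p : 0 <= x -> 0 <= r -> 0 <= y -> 0 <= p ->
  x <= C * (p * y) -> r <= C * p ->
  D (x - r*y) (p*y) = D x (p*y) - 2*(r/p)*x + (r*r/p)*y.
Proof. intros Hx Hr Hy Hp H1 H2. unfold D.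
  destruct (Req_dec p 0) as [E|Hp0].
  { subst p. assert (r = 0) by lra. assert (x = 0) by nra. subst. rewrite !Rdiv_0_r. lra. }
  destruct (Req_dec y 0) as [E|Hy0].
  { subst y. assert (x = 0) by nra. subst. unfold Rdiv. ring. }
  field. auto. Qed.

Lemma CS {A} (L : list A) (e w : A -> R) :
  (forall i, In i L -> 0 <= w i) -> (forall i, In i L -> w i = 0 -> e i = 0) ->
  0 < sumR (map w L) ->
  (sumR (map e L))^2 <= sumR (map w L) * sumR (map (fun i => D (e i) (w i)) L).
Proof. intros Hw He HW. set (W := sumR (map w L)). set (E := sumR (map e L)).
  set (t := E / W). assert (HW' : 0 < W) by exact HW.
  assert (Hid : forall i, In i L -> D (e i - t * w i) (w i) = D (e i) (w i) - 2*t*e i + t*t*w i).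
  { intros i Hi. unfold D. destruct (Req_dec (w i) 0) as [Z|Z].
    - rewrite (He i Hi Z), Z, !Rdiv_0_r. lra.
    - field; auto. }
  assert (H0 : 0 <= sumR (map (fun i => D (e i - t * w i) (w i)) L)).
  { apply sumR_nonneg; intros; apply D_nonneg; auto. }
  rewrite (sumR_ext _ _ _ Hid) in H0.
  rewrite sumR_plus, sumR_minus in H0.
  rewrite (sumR_scal (t*t) w) in H0. rewrite (sumR_scal (2*t) e) in H0.
  fold W E in H0. unfold t in H0.
  assert (E*E/W <= sumR (map (fun i => D (e i) (w i)) L)).
  { assert (E/W*(E/W)*W - 2*(E/W)*E = - (E*E/W)) by (field; lra). lra. }
  apply Rmult_le_compat_l with (r := W) in H; [|lra].
  replace (W * (E*E/W)) with (E^2) in H. auto. field. lra. Qed.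

Section Uniq.
Variables (a : nat) (qb : nat -> R) (rho : list nat -> R) (C : R).
Hypotheses (Hqb : forall b, 0 <= qb b) (Hsum : sumR (map qb (seq 0 a)) = 1)
  (Hr0 : forall w, 0 <= rho w) (Hnil : rho [] = 1)
  (HR : forall w, rho w = sumR (map (fun b => rho (w ++ [b])) (seq 0 a)))
  (HL : forall w, rho w = sumR (map (fun b => rho (b :: w)) (seq 0 a)))
  (Hb : forall w, rho w <= C * prodq qb w).

Let q := prodq qb.
Let Sw n (F : list nat -> R) := sumR (map F (words a n)).

Lemma Sq n : Sw n q = 1.
Proof. unfold Sw, q. rewrite words_prodq, Hsum. apply pow1. Qed.

Lemma Sright m x : Sw m (fun c => rho (x ++ c)) = rho x.
Proof. induction m. unfold Sw. rewrite words_0, app_nil_r; auto.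
  unfold Sw. replace (S m) with (m + 1)%nat by lia. rewrite words_split.
  rewrite <- IHm. apply sumR_ext; intros c _. rewrite words_1, (HR (x++c)).
  apply sumR_ext; intros. now rewrite app_assoc. Qed.

Lemma Sleft n y : Sw n (fun x => rho (x ++ y)) = rho y.
Proof. induction n. unfold Sw. rewrite words_0; auto.
  unfold Sw in *. rewrite words_S. rewrite sumR_swap. rewrite <- IHn.
  apply sumR_ext; intros w _. rewrite (HL (w++y)). auto. Qed.

Lemma rho_zero w : q w = 0 -> rho w = 0.
Proof. intros H. specialize (Hb w). specialize (Hr0 w). fold q in Hb. rewrite H in Hb. lra. Qed.

Lemma q_nonneg w : 0 <= q w.
Proof. apply prodq_nonneg; auto. Qed.

Let V n := Sw n (fun w => D (rho w) (q w)).

Lemma C_ge1 : 1 <= C.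
Proof. specialize (Hb []). rewrite Hnil in Hb. simpl in Hb. lra. Qed.

Lemma V_le n : V n <= C.
Proof. unfold V. apply Rle_trans with (Sw n (fun w => C * rho w)).
  - unfold Sw. apply sumR_le. intros w _. unfold D. pose proof (q_nonneg w).
    destruct (Req_dec (q w) 0) as [Z|Z].
    + rewrite Z, Rdiv_0_r. pose proof (Hr0 w). pose proof C_ge1. nra.
    + pose proof (Hb w) as B1. pose proof (Hr0 w) as B2. fold q in B1.
      assert (B3 : rho w / q w <= C).
      { apply Rmult_le_reg_r with (q w). lra. unfold Rdiv. rewrite Rmult_assoc, Rinv_l by auto. lra. }
      replace (rho w * rho w / q w) with (rho w * (rho w / q w)) by (unfold Rdiv; ring). nra.
  - unfold Sw. rewrite sumR_scal. pose proof (Sleft n []). unfold Sw in H.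
    rewrite (sumR_ext _ (fun x => rho (x ++ []))). rewrite H, Hnil. lra.
    intros; now rewrite app_nil_r. Qed.

Lemma key n m b : In b (words a m) -> (rho b - q b)^2 <= q b * (V (n+m) - V n).
Proof. intros Hbm.
  destruct (Req_dec (q b) 0) as [Z|Z].
  { rewrite (rho_zero _ Z), Z. nra. }
  assert (Hqb0 : 0 < q b) by (pose proof (q_nonneg b); lra).
  assert (HV : V (n+m) - V n = Sw n (fun x => Sw m (fun c => D (rho (x++c) - rho x * q c) (q x * q c)))).
  { unfold V, Sw. rewrite words_split. rewrite <- sumR_minus. apply sumR_ext. intros x _.
    rewrite (sumR_ext (fun c => D (rho (x ++ c) - rho x * q c) (q x * q c))
      (fun c => D (rho (x ++ c)) (q x * q c) - 2*(rho x / q x) * rho (x++c) + (rho x * rho x / q x) * q c)).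
    2:{ intros c _. apply (D_expand C); auto using q_nonneg;
        unfold q; try rewrite <- prodq_app; apply Hb. }
    rewrite sumR_plus, sumR_minus, !sumR_scal.
    rewrite (sumR_ext (fun c => D (rho (x ++ c)) (q (x ++ c))) (fun c => D (rho (x ++ c)) (q x * q c)))
      by (intros; unfold q; now rewrite prodq_app).
    pose proof (Sright m x). pose proof (Sq m). unfold Sw, q in *. rewrite H, H0.
    unfold D, Rdiv. ring. }
  rewrite HV.
  set (e := fun x => rho (x ++ b) - rho x * q b).
  set (w := fun x => q x * q b).
  assert (Hsw : sumR (map w (words a n)) = q b).
  { unfold w. rewrite (sumR_ext _ (fun x => q b * q x)) by (intros; lra).
    rewrite sumR_scal. pose proof (Sq n). unfold Sw in H. rewrite H. lra. }
  assert (Hse : sumR (map e (words a n)) = rho b - q b).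
  { unfold e. rewrite sumR_minus. pose proof (Sleft n b). unfold Sw in H. rewrite H.
    rewrite (sumR_ext _ (fun x => q b * rho x)) by (intros; lra).
    rewrite sumR_scal. pose proof (Sleft n []). unfold Sw in H0.
    rewrite (sumR_ext rho (fun x => rho (x ++ []))) by (intros; now rewrite app_nil_r).
    rewrite H0, Hnil. lra. }
  pose proof (CS (words a n) e w) as HCS.
  rewrite Hsw, Hse in HCS.
  eapply Rle_trans. apply HCS.
  - intros; unfold w; pose proof (q_nonneg i); nra.
  - intros i _ Hw. unfold w in Hw. assert (q i = 0) by nra. unfold e.
    rewrite (rho_zero i H). assert (rho (i ++ b) = 0). apply rho_zero. unfold q; rewrite prodq_app. fold q. rewrite H; lra.
    rewrite H0; lra.
  - lra.
  - apply Rmult_le_compat_l. lra. unfold Sw. apply sumR_le. intros x _.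
    apply (sumR_ge_in (fun c => D (rho (x ++ c) - rho x * q c) (q x * q c))); auto.
    intros; apply D_nonneg. pose proof (q_nonneg x); pose proof (q_nonneg x0); nra.
Qed.

Lemma uniq_main m b : In b (words a m) -> rho b = q b.
Proof. intros Hbm. apply NNPP; intros Hne.
  destruct (Req_dec (q b) 0) as [Z|Z]. { apply Hne. rewrite rho_zero; auto. }
  assert (Hqb0 : 0 < q b) by (pose proof (q_nonneg b); lra).
  set (d := (rho b - q b)^2 / q b).
  assert (Hd : 0 < d). { unfold d. apply Rdiv_lt_0_compat; auto. assert (rho b - q b <> 0) by lra. nra. }
  assert (Hind : forall t, INR t * d <= V (t * m)).
  { induction t. simpl. unfold V, Sw. rewrite words_0. unfold D. rewrite Hnil. simpl. unfold q; simpl.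
    rewrite Rmult_1_r. rewrite Rdiv_1_r. lra.
    pose proof (key (t*m) m b Hbm). replace (S t * m)%nat with (t*m + m)%nat by lia.
    rewrite S_INR. assert (d <= V (t*m+m) - V (t*m)).
    { unfold d. apply Rmult_le_reg_r with (q b); auto. unfold Rdiv. rewrite Rmult_assoc, Rinv_l by auto. lra. }
    lra. }
  destruct (INR_archimed d C Hd) as [t Ht]. specialize (Hind t). pose proof (V_le (t*m)). lra.
Qed.

End Uniq.


Lemma lub_of_eq E s : is_lub E s -> lub_of E = s.
Proof. intros H. unfold lub_of.
  assert (Hx : exists s, is_lub E s) by eauto.
  pose proof (epsilon_spec (inhabits 0) (fun s => is_lub E s) Hx) as H2.
  set (s' := epsilon _ _) in *. destruct H, H2. apply Rle_antisym; auto. Qed.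

Lemma lub_single E s : (exists t, E t) -> (forall t, E t -> t = s) -> lub_of E = s.
Proof. intros [t Ht] H. apply lub_of_eq. split.
  - intros x Hx. rewrite (H x Hx). lra.
  - intros b Hb. apply Hb. rewrite <- (H t Ht). auto. Qed.

Lemma map_nth_seq (w : list nat) d : map (fun i => nth i w d) (seq 0 (length w)) = w.
Proof. induction w; simpl; auto. f_equal. rewrite <- seq_shift, map_map. simpl. auto. Qed.

Lemma prefix_length z n : length (prefix z n) = n.
Proof. unfold prefix. now rewrite length_map, length_seq. Qed.

Lemma prodq_zero qb w b : In b w -> qb b = 0 -> prodq qb w = 0.
Proof. induction w; simpl; intros H Hq; [contradiction|]. destruct H as [<-|H].
  rewrite Hq; lra. rewrite IHw; auto; lra. Qed.

Lemma Rdist_cst (u : R) : Un_cv (fun _ => u) u.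
Proof. intros eps He. exists 0%nat. intros. unfold R_dist. rewrite Rminus_diag, Rabs_R0. auto. Qed.

Section Gen.
Variables (a : nat) (good : nat -> bool) (g : nat -> R) (Z : sq -> Prop) (phi : sq -> R).
Hypotheses (HZ : forall z, Z z <-> forall i, (z i < a)%nat /\ good (z i) = true)
  (Hphi : forall z, Z z -> phi z = g (z 0%nat))
  (Hne : exists b, (b < a)%nat /\ good b = true).

Definition ge_ b := if good b then exp (g b) else 0.
Definition Zs := sumR (map ge_ (seq 0 a)).
Definition qbg b := if (b <? a)%nat then ge_ b / Zs else 0.
Definition qg := prodq qbg.
Definition goodw (w : list nat) := Forall (fun b => (b < a)%nat /\ good b = true) w.

Lemma ge_nonneg b : 0 <= ge_ b.
Proof. unfold ge_. destruct (good b); [left; apply exp_pos| lra]. Qed.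

Lemma Zs_pos : 0 < Zs.
Proof. destruct Hne as [b [Hb Hg]]. unfold Zs.
  assert (ge_ b <= sumR (map ge_ (seq 0 a))).
  { apply sumR_ge_in. intros; apply ge_nonneg. apply in_seq; lia. }
  assert (ge_ b = exp (g b)) by (unfold ge_; rewrite Hg; auto). pose proof (exp_pos (g b)). lra. Qed.

Lemma qbg_nonneg b : 0 <= qbg b.
Proof. unfold qbg. destruct (b <? a)%nat; [|lra]. unfold Rdiv. apply Rmult_le_pos.
  apply ge_nonneg. left; apply Rinv_0_lt_compat, Zs_pos. Qed.

Lemma qbg_sum : sumR (map qbg (seq 0 a)) = 1.
Proof. rewrite (sumR_ext _ (fun b => / Zs * ge_ b)).
  rewrite sumR_scal. fold Zs. pose proof Zs_pos. field. lra.
  intros b Hb. apply in_seq in Hb. unfold qbg. replace (b <? a)%nat with true. unfold Rdiv; lra.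
  symmetry; apply Nat.ltb_lt; lia. Qed.

Lemma qbg_big b : (a <= b)%nat -> qbg b = 0.
Proof. intros H. unfold qbg. replace (b <? a)%nat with false; auto. symmetry; apply Nat.ltb_ge; auto. Qed.

Lemma point_iff w : (exists z, Z z /\ cyl w z) <-> goodw w.
Proof. split.
  - intros [z [Hz Hc]]. unfold cyl, prefix in Hc. unfold goodw. rewrite <- Hc.
    apply Forall_forall. intros x Hx. apply in_map_iff in Hx. destruct Hx as [i [<- _]]. apply HZ; auto.
  - intros Hg. destruct Hne as [b0 [Hb0 Hg0]]. exists (fun i => nth i w b0). split.
    + apply HZ. intros i. destruct (Nat.lt_ge_cases i (length w)).
      * unfold goodw in Hg. rewrite Forall_forall in Hg. apply Hg. apply nth_In; auto.
      * rewrite nth_overflow; auto.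
    + unfold cyl, prefix. apply map_nth_seq. Qed.

Lemma Z_shift z : Z z -> Z (shift z).
Proof. rewrite !HZ. intros H i. apply H. Qed.

Lemma birk_formula n z : Z z -> birk phi n z = sumR (map (fun i => g (z i)) (seq 0 n)).
Proof. revert z; induction n; intros z Hz; simpl; auto.
  rewrite IHn by (apply Z_shift; auto). rewrite Hphi by auto. f_equal.
  rewrite <- seq_shift, map_map. auto. Qed.

Lemma birk_cyl w z : Z z -> cyl w z -> birk phi (length w) z = sumR (map g w).
Proof. intros Hz Hc. rewrite birk_formula by auto. unfold cyl, prefix in Hc.
  rewrite <- Hc at 2. rewrite map_map. auto. Qed.

Lemma qg_good w : goodw w -> qg w = exp (sumR (map g w)) / Zs ^ (length w).
Proof. unfold qg, goodw. induction w; intros H; simpl. unfold Rdiv; rewrite exp_0; lra.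
  inversion H; subst. destruct H2. rewrite IHw by auto. unfold qbg, ge_.
  replace (a0 <? a)%nat with true by (symmetry; apply Nat.ltb_lt; auto). rewrite H1.
  rewrite exp_plus. pose proof Zs_pos. field. split. apply pow_nonzero; lra. lra. Qed.

Lemma exp_gibbs w z : Z z -> cyl w z ->
  exp (- INR (length w) * ln Zs + birk phi (length w) z) = qg w.
Proof. intros Hz Hc. rewrite birk_cyl by auto. rewrite qg_good by (apply point_iff; eauto).
  rewrite exp_plus. rewrite <- Rpower_pow by apply Zs_pos. unfold Rpower.
  replace (- INR (length w) * ln Zs) with (- (INR (length w) * ln Zs)) by ring.
  rewrite exp_Ropp. unfold Rdiv. ring. Qed.

Lemma pressure_gen : is_pressure a Z phi (ln Zs).
Proof. unfold is_pressure.
  apply Un_cv_ext with (fun _ => ln Zs); [|apply Rdist_cst]. intros n.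
  rewrite (sumR_ext _ (prodq ge_)).
  - rewrite words_prodq. fold Zs. rewrite ln_pow by apply Zs_pos. field. apply not_0_INR; lia.
  - intros w Hw. apply in_words in Hw. destruct Hw as [Hl Hf].
    destruct (excluded_middle_informative _) as [Hp|Hp].
    + assert (Hg : goodw w) by (apply point_iff; auto).
      rewrite (lub_single _ (sumR (map g w))).
      * clear -Hg. unfold goodw in Hg. induction Hg; simpl. apply exp_0.
        rewrite exp_plus, IHHg. unfold ge_. destruct H as [_ ->]. auto.
      * destruct Hp as [z [Hz Hc]]. eauto.
      * intros t [z [Hz [Hc ->]]]. rewrite <- Hl. apply birk_cyl; auto.
    + symmetry. assert (~ goodw w) by (rewrite <- point_iff; auto).
      unfold goodw in H. rewrite Forall_forall in Hf, H.
      apply NNPP; intro Hn. apply H. intros b Hb. split. apply Hf; auto.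
      destruct (good b) eqn:E; auto. exfalso. apply Hn. apply (prodq_zero _ _ b); auto.
      unfold ge_; rewrite E; auto. Qed.

Lemma inv_meas_gen : inv_meas a Z qg.
Proof. split; [|split; [|split; [|split]]].
  - intros w. apply prodq_nonneg, qbg_nonneg.
  - reflexivity.
  - intros w. rewrite (sumR_ext _ (fun b => qg w * qbg b)).
    rewrite sumR_scal, qbg_sum; lra. intros. unfold qg. rewrite prodq_app. simpl. ring.
  - intros w. rewrite (sumR_ext _ (fun b => qg w * qbg b)).
    rewrite sumR_scal, qbg_sum; lra. intros. unfold qg. simpl. ring.
  - intros w Hn. rewrite point_iff in Hn. unfold goodw in Hn.
    apply NNPP; intro Hq. apply Hn. apply Forall_forall. intros b Hb.
    apply NNPP; intro Hbb. apply Hq. unfold qg. apply (prodq_zero _ _ b); auto.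
    unfold qbg. destruct (b <? a)%nat eqn:E; auto. apply Nat.ltb_lt in E.
    unfold ge_. destruct (good b) eqn:E2. exfalso; auto. unfold Rdiv; ring. Qed.

Lemma gibbs_gen : gibbs a Z phi qg.
Proof. split. apply inv_meas_gen. exists (ln Zs), 2. split. apply pressure_gen. split. lra.
  intros z n Hz Hn. assert (Hc : cyl (prefix z n) z) by (unfold cyl; now rewrite prefix_length).
  pose proof (exp_gibbs _ _ Hz Hc). rewrite prefix_length in H. rewrite H.
  assert (0 < qg (prefix z n)). { rewrite <- H. apply exp_pos. }
  unfold Rdiv. rewrite Rinv_r by lra. split; lra. Qed.

Lemma gibbs_uniq mu : gibbs a Z phi mu -> forall w, mu w = qg w.
Proof. intros [Hm [P [C0 [HP [HC0 Hb]]]]].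
  assert (EP : P = ln Zs) by (eapply UL_sequence; eauto; apply pressure_gen).
  subst P. destruct Hm as [H0 [H1 [HR [HL Hs]]]].
  assert (Hbnd : forall w, mu w <= (C0 + 1) * qg w).
  { intros w. destruct (classic (exists z, Z z /\ cyl w z)) as [[z [Hz Hc]]|Hn].
    - destruct w as [|b w']. rewrite H1. unfold qg; simpl. lra.
      assert (Hn : (1 <= length (b::w'))%nat) by (simpl; lia).
      specialize (Hb z _ Hz Hn). unfold cyl in Hc. rewrite Hc in Hb.
      rewrite exp_gibbs in Hb by auto. destruct Hb as [_ Hb].
      assert (0 < qg (b::w')). { rewrite <- (exp_gibbs _ z); auto. apply exp_pos. }
      apply Rmult_lt_compat_r with (r := qg (b::w')) in Hb; auto.
      unfold Rdiv in Hb. rewrite Rmult_assoc, Rinv_l in Hb by lra. lra.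
    - rewrite Hs by auto. pose proof (prodq_nonneg qbg w qbg_nonneg). fold qg in H. nra. }
  intros w. destruct (classic (goodw w)) as [Hg|Hg].
  - apply (uniq_main a qbg mu (C0+1)) with (m := length w); auto using qbg_nonneg, qbg_sum.
    apply (in_words a (length w)). split; auto. unfold goodw in Hg.
    eapply Forall_impl; [|apply Hg]. simpl; tauto.
  - rewrite Hs by (rewrite point_iff; auto).
    symmetry. apply NNPP; intro Hq. apply Hg. unfold goodw. apply Forall_forall. intros b Hbw.
    apply NNPP; intro Hbb. apply Hq. unfold qg. apply (prodq_zero _ _ b); auto.
    unfold qbg. destruct (b <? a)%nat eqn:E; auto. apply Nat.ltb_lt in E.
    unfold ge_. destruct (good b) eqn:E2. exfalso; auto. unfold Rdiv; ring. Qed.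

End Gen.


Lemma prefix_S y n : prefix y (S n) = y 0%nat :: prefix (shift y) n.
Proof. unfold prefix. simpl. f_equal. rewrite <- seq_shift, map_map. auto. Qed.

Lemma prefix_add x n d : prefix x (n + d) = prefix x n ++ map x (seq n d).
Proof. unfold prefix. rewrite seq_app, map_app. auto. Qed.

Lemma prefix_firstn x n N : (n <= N)%nat -> prefix x n = firstn n (prefix x N).
Proof. intros H. replace N with (n + (N - n))%nat by lia. rewrite prefix_add.
  rewrite firstn_app, prefix_length, Nat.sub_diag. simpl. rewrite app_nil_r.
  rewrite firstn_all2; auto. rewrite prefix_length; lia. Qed.

Lemma firstn_app_len (u v : list nat) : firstn (length u) (u ++ v) = u.
Proof. rewrite firstn_app, Nat.sub_diag. simpl. rewrite app_nil_r, firstn_all. auto. Qed.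

Lemma exp_sum (g : nat -> R) w : exp (sumR (map g w)) = prodq (fun b => exp (g b)) w.
Proof. induction w; simpl. apply exp_0. rewrite exp_plus, IHw. auto. Qed.

Lemma sumR_filter {A} (p : A -> bool) (F : A -> R) L :
  sumR (map F (filter p L)) = sumR (map (fun x => if p x then F x else 0) L).
Proof. induction L; simpl; auto. destruct (p a); simpl; rewrite IHL; lra. Qed.

Lemma sum_indic (L : list nat) x c : NoDup L -> In x L ->
  sumR (map (fun s => if (x =? s)%nat then c else 0) L) = c.
Proof. induction L; simpl; intros Hn Hi; [contradiction|]. inversion Hn; subst.
  destruct Hi as [->|Hi].
  - rewrite Nat.eqb_refl. rewrite sumR_zero. lra. intros s Hs.
    destruct (x =? s)%nat eqn:E; auto. apply Nat.eqb_eq in E; subst; contradiction.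
  - rewrite IHL; auto. destruct (x =? a)%nat eqn:E; [|lra]. apply Nat.eqb_eq in E; subst; contradiction. Qed.

Lemma Un_cv_event (u : nat -> R) c n0 : (forall N, (n0 <= N)%nat -> u N = c) -> Un_cv u c.
Proof. intros H eps He. exists n0. intros N HN. unfold R_dist. rewrite H by lia.
  rewrite Rminus_diag, Rabs_R0. auto. Qed.

Section Main.
Variables (k l : nat) (Y : sq -> Prop) (pi : sq -> sq) (f : sq -> R).
Hypotheses (Hk : (1 <= k)%nat) (HY : subshift l Y) (Hpi : one_block_factor k l Y pi)
  (Hf : forall x x', in_alph k x -> in_alph k x' -> x 0%nat = x' 0%nat -> f x = f x').

Definition ph b := pi (fun _ => b) 0%nat.
Definition fX b := f (fun _ => b).

Lemma in_alph_shift x : in_alph k x -> in_alph k (shift x).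
Proof. intros H i. apply H. Qed.

Lemma pi_phi x i : in_alph k x -> pi x i = ph (x i).
Proof. revert x; induction i; intros x Hx; destruct Hpi as [_ [_ [_ [H4 H5]]]].
  - unfold ph. apply H5; auto. intros j; apply Hx.
  - pose proof (H4 x i Hx). unfold shift at 2 in H. rewrite <- H.
    rewrite IHi by (apply in_alph_shift; auto). auto. Qed.

Lemma ph_lt b : (b < k)%nat -> (ph b < l)%nat.
Proof. intros H. destruct Hpi as [H1 _]. destruct HY as [HY1 _].
  apply (HY1 _ (H1 (fun _ => b) (fun _ => H))). Qed.

Lemma f_formula x : in_alph k x -> f x = fX (x 0%nat).
Proof. intros H. apply Hf; auto. intros i; apply H. Qed.

Lemma HZX : forall z, in_alph k z <-> forall i, (z i < k)%nat /\ (fun _ : nat => true) (z i) = true.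
Proof. intros z; split; intros H i; [split; auto|apply H]. Qed.

Lemma birkX w z : in_alph k z -> cyl w z -> birk f (length w) z = sumR (map fX w).
Proof. apply (birk_cyl k (fun _ => true) fX); [apply HZX | apply f_formula]. Qed.

Definition eX b := exp (fX b).
Definition G s := sumR (map (fun b => if (ph b =? s)%nat then eX b else 0) (seq 0 k)).

Definition pre_pt (w : list nat) : sq := fun i => nth i w 0%nat.

Lemma pre_pt_alph w : Forall (fun b => (b < k)%nat) w -> in_alph k (pre_pt w).
Proof. intros H i. unfold pre_pt. destruct (Nat.lt_ge_cases i (length w)).
  rewrite Forall_forall in H. apply H, nth_In; auto. rewrite nth_overflow; auto; lia. Qed.

Lemma pre_pt_cyl w : cyl w (pre_pt w).
Proof. unfold cyl, prefix, pre_pt. apply map_nth_seq. Qed.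

Lemma prefix_pi x n : in_alph k x -> prefix (pi x) n = map ph (prefix x n).
Proof. intros H. unfold prefix. rewrite map_map. apply map_ext. intros; apply pi_phi; auto. Qed.

Lemma cmi_iff w v : Forall (fun b => (b < k)%nat) w -> (length v <= length w)%nat ->
  (cyl_maps_into k pi w v <-> map ph (firstn (length v) w) = v).
Proof. intros Hw Hl. split.
  - intros H. specialize (H _ (pre_pt_alph w Hw) (pre_pt_cyl w)). unfold cyl in H.
    rewrite prefix_pi in H by (apply pre_pt_alph; auto).
    transitivity (map ph (prefix (pre_pt w) (length v))); [|auto]. f_equal.
    pose proof (pre_pt_cyl w). unfold cyl in H0.
    rewrite (prefix_firstn _ _ (length w)) by auto. now rewrite H0.
  - intros H x Hx Hc. unfold cyl in *. rewrite prefix_pi by auto.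
    transitivity (map ph (firstn (length v) w)); [|auto]. f_equal.
    rewrite (prefix_firstn _ _ (length w)) by auto. now rewrite Hc. Qed.

Definition T n (y : sq) := sumR (map (fun w => if list_eq_dec Nat.eq_dec (map ph w) (prefix y n)
   then prodq eX w else 0) (words k n)).

Lemma T_prod n y : T n y = prodq G (prefix y n).
Proof. revert y; induction n; intros y. unfold T. rewrite words_0. simpl. auto.
  unfold T. rewrite words_S. rewrite prefix_S. simpl prodq. rewrite <- IHn. unfold G, T.
  rewrite Rmult_comm, <- sumR_scal. apply sumR_ext. intros b _.
  destruct (Nat.eqb_spec (ph b) (y 0%nat)) as [E|E].
  - rewrite Rmult_comm, <- sumR_scal. apply sumR_ext. intros w _.
    destruct (list_eq_dec Nat.eq_dec (map ph w) (prefix (shift y) n)) as [E1|E1];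
    destruct (list_eq_dec Nat.eq_dec (map ph (b::w)) (y 0%nat :: prefix (shift y) n)) as [E2|E2].
    + simpl. unfold eX. lra.
    + exfalso. apply E2. simpl. rewrite E, E1. auto.
    + exfalso. simpl in E2. inversion E2; auto.
    + lra.
  - rewrite Rmult_0_r. apply sumR_zero. intros w _.
    destruct (list_eq_dec Nat.eq_dec (map ph (b::w)) (y 0%nat :: prefix (shift y) n)) as [E1|E1]; auto.
    exfalso. simpl in E1. inversion E1; auto. Qed.

Lemma gbar_T n y : gbar k pi f n y = T n y.
Proof. unfold gbar. apply lub_single.
  - set (L := filter (fun w => if list_eq_dec Nat.eq_dec (map ph w) (prefix y n) then true else false) (words k n)).
    exists (sumR (map (fun w => exp (birk f n (pre_pt w))) L)). exists pre_pt, L.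
    split; [|split; [|split]]; auto.
    + apply NoDup_filter, NoDup_words.
    + intros w. unfold L. rewrite filter_In, in_words. split.
      * intros [[Hl Hf'] Hp]. split; auto. split; auto. apply cmi_iff; auto.
        rewrite prefix_length; lia. rewrite prefix_length, <- Hl, firstn_all, Hl.
        destruct (list_eq_dec Nat.eq_dec (map ph w) (prefix y n)); auto; discriminate.
      * intros [Hl [Hf' Hc]]. split; auto. apply cmi_iff in Hc; auto.
        2: rewrite prefix_length; lia. rewrite prefix_length, <- Hl, firstn_all, Hl in Hc.
        destruct (list_eq_dec Nat.eq_dec (map ph w) (prefix y n)); auto.
    + intros w Hw. unfold L in Hw. apply filter_In in Hw. destruct Hw as [Hw _].
      apply in_words in Hw. split. apply pre_pt_alph; tauto. apply pre_pt_cyl.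
  - intros t [c [L [HN [HL [Hc ->]]]]].
    set (L' := filter (fun w => if list_eq_dec Nat.eq_dec (map ph w) (prefix y n) then true else false) (words k n)).
    assert (HP : Permutation L L').
    { apply NoDup_Permutation; auto. apply NoDup_filter, NoDup_words.
      intros w. unfold L'. rewrite HL, filter_In, in_words. split.
      * intros [Hl [Hf' Hc']]. split; auto. apply cmi_iff in Hc'; auto.
        2: rewrite prefix_length; lia. rewrite prefix_length, <- Hl, firstn_all, Hl in Hc'.
        destruct (list_eq_dec Nat.eq_dec (map ph w) (prefix y n)); auto.
      * intros [[Hl Hf'] Hp]. split; auto. split; auto. apply cmi_iff; auto.
        rewrite prefix_length; lia. rewrite prefix_length, <- Hl, firstn_all, Hl.
        destruct (list_eq_dec Nat.eq_dec (map ph w) (prefix y n)); auto; discriminate. }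
    rewrite (sumR_ext _ (prodq eX)).
    + rewrite (sumR_perm _ _ (Permutation_map _ HP)). unfold L'. rewrite sumR_filter.
      unfold T. apply sumR_ext. intros w _. destruct (list_eq_dec Nat.eq_dec (map ph w) (prefix y n)); auto.
    + intros w Hw. destruct (Hc w Hw) as [Ha Hcy]. apply HL in Hw. destruct Hw as [Hl _].
      rewrite <- Hl, birkX by auto. apply exp_sum. Qed.

Lemma gbar_prod n y : gbar k pi f n y = prodq G (prefix y n).
Proof. rewrite gbar_T. apply T_prod. Qed.

Lemma part1 : forall n y, (2 <= n)%nat -> Y y ->
     gbar k pi f n y = gbar k pi f 1 y * gbar k pi f (n - 1) (shift y).
Proof. intros n y Hn _. rewrite !gbar_prod. destruct n as [|n]; [lia|].
  rewrite prefix_S. simpl. replace (n - 0)%nat with n by lia. lra. Qed.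

Lemma Y_pi z : Y z -> exists x, in_alph k x /\ pi x = z.
Proof. destruct Hpi as [_ [H2 _]]. apply H2. Qed.

Lemma eX_pos b : 0 < eX b.
Proof. apply exp_pos. Qed.

Lemma G_nonneg s : 0 <= G s.
Proof. unfold G. apply sumR_nonneg. intros b _. destruct (ph b =? s)%nat; [left; apply eX_pos|lra]. Qed.

Lemma G_ph_pos b : (b < k)%nat -> 0 < G (ph b).
Proof. intros Hb. unfold G.
  assert (eX b <= sumR (map (fun b0 => if (ph b0 =? ph b)%nat then eX b0 else 0) (seq 0 k))).
  { replace (eX b) with ((fun b0 => if (ph b0 =? ph b)%nat then eX b0 else 0) b) at 1
      by (simpl; rewrite Nat.eqb_refl; auto).
    apply (sumR_ge_in (fun b0 => if (ph b0 =? ph b)%nat then eX b0 else 0) _ b).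
    intros x _. destruct (ph x =? ph b)%nat; [left; apply eX_pos|lra]. apply in_seq; lia. }
  pose proof (eX_pos b). lra. Qed.

Lemma G_pos_Y z i : Y z -> 0 < G (z i).
Proof. intros Hz. destruct (Y_pi z Hz) as [x [Hx <-]]. rewrite pi_phi by auto. apply G_ph_pos, Hx. Qed.

Definition h s := ln (G s).

Lemma prodq_pos w : (forall b, In b w -> 0 < G b) -> 0 < prodq G w.
Proof. induction w; simpl; intros H. lra. apply Rmult_lt_0_compat; auto. Qed.

Lemma ln_prodq w : (forall b, In b w -> 0 < G b) -> ln (prodq G w) = sumR (map h w).
Proof. induction w; simpl; intros H. apply ln_1. rewrite ln_mult, IHw; auto.
  apply prodq_pos; auto. Qed.

Lemma F_cyl n N z w : (n <= N)%nat -> Y z -> cyl w z -> length w = N ->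
  ln (gbar k pi f n z) = sumR (map h (firstn n w)).
Proof. intros Hn Hz Hc Hl. rewrite gbar_prod. rewrite ln_prodq.
  - rewrite (prefix_firstn _ _ N) by auto. unfold cyl in Hc. rewrite Hl in Hc. rewrite Hc. auto.
  - intros b Hb. unfold prefix in Hb.
    apply in_map_iff in Hb. destruct Hb as [i [<- _]]. apply G_pos_Y; auto. Qed.

Section Integ.
Variable m : list nat -> R.
Hypothesis Hm : inv_meas l Y m.

Definition J := sumR (map (fun b => m [b] * h b) (seq 0 l)).
Definition K n := sumR (map (fun x => m x * sumR (map h x)) (words l n)).

Lemma K_val n : K n = INR n * J.
Proof. destruct Hm as [H0 [H1 [HR [HL Hs]]]].
  induction n. unfold K. rewrite words_0. simpl. lra.
  unfold K. replace (S n) with (n + 1)%nat by lia. rewrite words_split.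
  rewrite plus_INR. simpl (INR 1). rewrite Rmult_plus_distr_r, Rmult_1_l, <- IHn.
  unfold K. rewrite (sumR_ext _ (fun x => sumR (map h x) * m x + sumR (map (fun b => h b * m (x ++ [b])) (seq 0 l)))).
  - rewrite sumR_plus. f_equal. apply sumR_ext; intros; lra.
    rewrite sumR_swap. unfold J. apply sumR_ext. intros b _.
    rewrite sumR_scal. pose proof (Sleft l m HL n [b]). cbv beta in H. rewrite H. lra.
  - intros x _. rewrite words_1. rewrite (HR x) at 1. rewrite <- sumR_scal, <- sumR_plus.
    apply sumR_ext. intros b _. rewrite map_app, sumR_app. simpl. lra. Qed.

Lemma riemann_val n N : (n <= N)%nat -> riemann l Y m (fun y => ln (gbar k pi f n y)) N = INR n * J.
Proof. intros HnN. destruct Hm as [H0 [H1 [HR [HL Hs]]]]. unfold riemann.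
  rewrite (sumR_ext _ (fun w => m w * sumR (map h (firstn n w)))).
  - rewrite <- K_val. replace N with (n + (N - n))%nat by lia. rewrite words_split.
    unfold K. apply sumR_ext. intros x Hx. apply in_words in Hx. destruct Hx as [Hxl _].
    rewrite (sumR_ext _ (fun y => sumR (map h x) * m (x ++ y))).
    + rewrite sumR_scal. pose proof (Sright l m HR (N - n) x). cbv beta in H. rewrite H. lra.
    + intros y _. rewrite <- Hxl, firstn_app_len. lra.
  - intros w Hw. apply in_words in Hw. destruct Hw as [Hl _].
    destruct (classic (exists z, Y z /\ cyl w z)) as [Hp|Hp].
    + pose proof (epsilon_spec (inhabits (fun _ => 0%nat)) (fun z => Y z /\ cyl w z) Hp) as [Hz Hc].
      rewrite (F_cyl n N _ w); auto.
    + rewrite (Hs w Hp). lra. Qed.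

End Integ.

Lemma part2 : forall m, inv_meas l Y m ->
     exists (I : nat -> R) (J : R),
       (forall n, (1 <= n)%nat -> is_integral l Y m (fun y => ln (gbar k pi f n y)) (I n)) /\
       is_integral l Y m (fun y => ln (gbar k pi f 1 y)) J /\
       Un_cv (fun n => I (S n) / INR (S n)) J.
Proof. intros m Hm. exists (fun n => INR n * J m), (J m). split; [|split].
  - intros n _. unfold is_integral. apply (Un_cv_event _ _ n). intros; apply riemann_val; auto.
  - unfold is_integral. apply (Un_cv_event _ _ 1). intros. rewrite riemann_val; auto. simpl; lra.
  - apply Un_cv_ext with (fun _ => J m); [|apply Rdist_cst]. intros n. field. apply not_0_INR; lia. Qed.

Definition goodY s := existsb (fun b => (ph b =? s)%nat) (seq 0 k).
Definition pre s := hd 0%nat (filter (fun b => (ph b =? s)%nat) (seq 0 k)).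

Lemma pre_spec s : goodY s = true -> (pre s < k)%nat /\ ph (pre s) = s.
Proof. intros H. unfold goodY in H. apply existsb_exists in H. destruct H as [b [Hb Hp]].
  unfold pre. destruct (filter (fun b => (ph b =? s)%nat) (seq 0 k)) eqn:E.
  - assert (In b (filter (fun b => (ph b =? s)%nat) (seq 0 k))) by (apply filter_In; auto).
    rewrite E in H; contradiction.
  - assert (In n (filter (fun b => (ph b =? s)%nat) (seq 0 k))) by (rewrite E; simpl; auto).
    apply filter_In in H. destruct H as [H1 H2]. apply in_seq in H1. apply Nat.eqb_eq in H2.
    simpl. split; auto; lia. Qed.

Lemma goodY_ph b : (b < k)%nat -> goodY (ph b) = true.
Proof. intros H. unfold goodY. apply existsb_exists. exists b. split. apply in_seq; lia. apply Nat.eqb_refl. Qed.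

Lemma HZY : forall z, Y z <-> forall i, (z i < l)%nat /\ goodY (z i) = true.
Proof. intros z. split.
  - intros Hz i. split. destruct HY as [HY1 _]. apply HY1; auto.
    destruct (Y_pi z Hz) as [x [Hx <-]]. rewrite pi_phi by auto. apply goodY_ph, Hx.
  - intros H. set (x := fun i => pre (z i)).
    assert (Hx : in_alph k x). { intros i. apply pre_spec, H. }
    assert (E : pi x = z). { apply functional_extensionality. intros i. rewrite pi_phi by auto.
      apply pre_spec, H. }
    rewrite <- E. destruct Hpi as [H1 _]. apply H1; auto. Qed.

Lemma HphiY : forall z, Y z -> (fun y => ln (gbar k pi f 1 y)) z = h (z 0%nat).
Proof. intros z _. simpl. rewrite gbar_prod. unfold prefix. simpl. rewrite Rmult_1_r. auto. Qed.

Lemma HneY : exists s, (s < l)%nat /\ goodY s = true.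
Proof. exists (ph 0%nat). split. apply ph_lt; lia. apply goodY_ph; lia. Qed.

Lemma HneX : exists b, (b < k)%nat /\ (fun _ : nat => true) b = true.
Proof. exists 0%nat. split; auto; lia. Qed.

Let qX := qg k (fun _ => true) fX.
Let qY := qg l goodY h.

Lemma G_zero s : goodY s = false -> G s = 0.
Proof. intros H. unfold G. apply sumR_zero. intros b Hb. destruct (ph b =? s)%nat eqn:E; auto.
  apply Nat.eqb_eq in E. subst. apply in_seq in Hb. rewrite goodY_ph in H by lia. discriminate. Qed.

Lemma geY_G s : ge_ goodY h s = G s.
Proof. unfold ge_. destruct (goodY s) eqn:E.
  - unfold h. apply exp_ln. apply pre_spec in E. destruct E as [E1 E2]. rewrite <- E2. apply G_ph_pos; auto.
  - symmetry. apply G_zero; auto. Qed.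

Lemma Zs_eq : Zs l goodY h = Zs k (fun _ => true) fX.
Proof. unfold Zs. rewrite (sumR_ext _ G) by (intros; apply geY_G). unfold G.
  rewrite sumR_swap. apply sumR_ext. intros b Hb. apply in_seq in Hb.
  rewrite sum_indic. unfold ge_, eX; auto. apply seq_NoDup. apply in_seq. pose proof (ph_lt b). lia. Qed.

Lemma QB s : sumR (map (fun b => if (ph b =? s)%nat then qbg k (fun _ => true) fX b else 0) (seq 0 k)) =
  qbg l goodY h s.
Proof. rewrite (sumR_ext _ (fun b => / Zs k (fun _ => true) fX * (if (ph b =? s)%nat then eX b else 0))).
  - rewrite sumR_scal. fold (G s). unfold qbg. rewrite geY_G, Zs_eq.
    destruct (s <? l)%nat eqn:E. unfold Rdiv; lra.
    apply Nat.ltb_ge in E. rewrite G_zero. lra.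
    destruct (goodY s) eqn:E2; auto. apply pre_spec in E2. destruct E2 as [E3 E4].
    pose proof (ph_lt _ E3). lia.
  - intros b Hb. apply in_seq in Hb. unfold qbg. replace (b <? k)%nat with true by (symmetry; apply Nat.ltb_lt; lia).
    destruct (ph b =? s)%nat; unfold ge_, eX, Rdiv; simpl; lra. Qed.

Lemma push_fin v : sumR (map (fun x => if list_eq_dec Nat.eq_dec (map ph x) v then qX x else 0)
   (words k (length v))) = qY v.
Proof. induction v as [|s v IH]. simpl. unfold qX, qY, qg. simpl. lra.
  simpl length. rewrite words_S. unfold qY, qg. simpl prodq. fold (qg l goodY h v). fold qY. rewrite <- IH, <- QB.
  rewrite Rmult_comm, <- sumR_scal. apply sumR_ext. intros b _.
  destruct (Nat.eqb_spec (ph b) s) as [E|E].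
  - rewrite Rmult_comm, <- sumR_scal. apply sumR_ext. intros w _.
    destruct (list_eq_dec Nat.eq_dec (map ph w) v) as [E1|E1];
    destruct (list_eq_dec Nat.eq_dec (map ph (b::w)) (s :: v)) as [E2|E2].
    + unfold qX, qg. simpl. lra.
    + exfalso. apply E2. simpl. rewrite E, E1. auto.
    + exfalso. simpl in E2. inversion E2; auto.
    + lra.
  - rewrite Rmult_0_r. apply sumR_zero. intros w _.
    destruct (list_eq_dec Nat.eq_dec (map ph (b::w)) (s :: v)) as [E1|E1]; auto.
    exfalso. simpl in E1. inversion E1; auto. Qed.

Lemma push_X mu : (forall w, mu w = qX w) -> pushforward k pi mu qY.
Proof. intros Hmu v. exists (length v). intros N HN.
  rewrite (sumR_ext _ (fun w => if list_eq_dec Nat.eq_dec (map ph (firstn (length v) w)) v then qX w else 0)).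
  - replace N with (length v + (N - length v))%nat by lia. rewrite words_split.
    rewrite <- push_fin. apply sumR_ext. intros x Hx. apply in_words in Hx. destruct Hx as [Hxl _].
    rewrite (sumR_ext _ (fun y => (if list_eq_dec Nat.eq_dec (map ph x) v then qX x else 0) * qX y)).
    + rewrite sumR_scal. unfold qX, qg. rewrite words_prodq, qbg_sum by apply HneX. rewrite pow1. lra.
    + intros y _. rewrite <- Hxl, firstn_app_len.
      destruct (list_eq_dec Nat.eq_dec (map ph x) v); [|lra]. unfold qX, qg. rewrite prodq_app. auto.
  - intros w Hw. apply in_words in Hw. destruct Hw as [Hwl Hwf].
    destruct (excluded_middle_informative _) as [Hc|Hc];
    destruct (list_eq_dec Nat.eq_dec (map ph (firstn (length v) w)) v) as [E|E]; auto.
    + exfalso. apply E. apply cmi_iff; auto. lia.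
    + exfalso. apply Hc. apply cmi_iff; auto. lia. Qed.

Lemma part3 : ((exists mu, gibbs k (in_alph k) f mu) /\
   (forall mu mu', gibbs k (in_alph k) f mu -> gibbs k (in_alph k) f mu' ->
      forall w, mu w = mu' w) /\
   (forall mu, gibbs k (in_alph k) f mu ->
      exists nu, pushforward k pi mu nu /\
        gibbs l Y (fun y => ln (gbar k pi f 1 y)) nu /\
        (forall nu', gibbs l Y (fun y => ln (gbar k pi f 1 y)) nu' ->
           forall w, nu' w = nu w))).
Proof.
  pose proof (gibbs_gen k (fun _ => true) fX (in_alph k) f HZX f_formula HneX) as GX.
  pose proof (gibbs_uniq k (fun _ => true) fX (in_alph k) f HZX f_formula HneX) as UX.
  pose proof (gibbs_gen l goodY h Y _ HZY HphiY HneY) as GY.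
  pose proof (gibbs_uniq l goodY h Y _ HZY HphiY HneY) as UY.
  split; [|split].
  - eauto.
  - intros mu mu' H1 H2 w. rewrite (UX mu H1), (UX mu' H2). auto.
  - intros mu Hmu. exists qY. split; [|split].
    + apply push_X. apply UX; auto.
    + apply GY.
    + intros nu' H w. apply UY; auto. Qed.

End Main.

Theorem proposition6p1 (k l : nat) (Y : sq -> Prop) (pi : sq -> sq) (f : sq -> R) :
  (1 <= k)%nat ->
  subshift l Y ->
  one_block_factor k l Y pi ->
  (forall x x', in_alph k x -> in_alph k x' -> x 0%nat = x' 0%nat -> f x = f x') ->
  (forall n y, (2 <= n)%nat -> Y y ->
     gbar k pi f n y = gbar k pi f 1 y * gbar k pi f (n - 1) (shift y)) /\
  (forall m, inv_meas l Y m ->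
     exists (I : nat -> R) (J : R),
       (forall n, (1 <= n)%nat -> is_integral l Y m (fun y => ln (gbar k pi f n y)) (I n)) /\
       is_integral l Y m (fun y => ln (gbar k pi f 1 y)) J /\
       Un_cv (fun n => I (S n) / INR (S n)) J) /\
  ((exists mu, gibbs k (in_alph k) f mu) /\
   (forall mu mu', gibbs k (in_alph k) f mu -> gibbs k (in_alph k) f mu' ->
      forall w, mu w = mu' w) /\
   (forall mu, gibbs k (in_alph k) f mu ->
      exists nu, pushforward k pi mu nu /\
        gibbs l Y (fun y => ln (gbar k pi f 1 y)) nu /\
        (forall nu', gibbs l Y (fun y => ln (gbar k pi f 1 y)) nu' ->
           forall w, nu' w = nu w))).
Proof.
  intros Hk HY Hpi Hf. split; [|split].
  - eapply part1; eassumption.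
  - eapply part2; eassumption.
  - eapply part3; eassumption.
Qed.
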